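(* Let $K$ be a field, $q\in K[x_1]\setminus K$, and let $f,g\in R_q[\tilde{\bm{x}}]\setminus R_q$ be such that $\operatorname{lm}(f)$ and $\operatorname{lm}(g)$ are relatively prime. Let $l_f:=\iota_q(\operatorname{lc}(f))$, $l_g:=\iota_q(\operatorname{lc}(g))$, $d:=\gcd(l_f,l_g)$, $f_1:=f-\operatorname{lt}(f)$, $g_1:=g-\operatorname{lt}(g)$. Then $$\sigma_q(d)\cdot S(f,g)=f_1\cdot\operatorname{lt}(g)-g_1\cdot\operatorname{lt}(f)=f_1g-g_1f.$$
   Context: $R_q:=\{r\in K[x_1]:\deg r<\deg q\}$ with operations modulo $q$ ($R_q\cong K[x_1]/(q)$); $R_q^\times$ its units. $\sigma_q:K[x_1]\to R_q$ is reduction modulo $q$ and $\iota_q:R_q\hookrightarrow K[x_1]$ the inclusion, both extended coefficientwise to polynomials in $\tilde{\bm{x}}=(x_2,\dots,x_n)$. A monomial ordering on monomials in $\tilde{\bm{x}}$ is fixed; for nonzero $f\in R_q[\tilde{\bm{x}}]$, $\operatorname{lm}(f)$, $\operatorname{lc}(f)$, $\operatorname{lt}(f)=\operatorname{lc}(f)\operatorname{lm}(f)$ are the leading monomial, coefficient and term. Gcds in $K[x_1]$ are monic and $\operatorname{lcm}(a,b)=ab/\gcd(a,b)$. For $f\in R_q[\tilde{\bm{x}}]\setminus R_q$ and $g\in R_q[\tilde{\bm{x}}]\setminus(R_q^\times\cup\{0\})$, with $m_f:=\sigma_q(\operatorname{lcm}(l_f,l_g)/l_f)$, $m_g:=\sigma_q(\operatorname{lcm}(l_f,l_g)/l_g)$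 and $\tilde{\bm{x}}^\gamma:=\operatorname{lcm}(\operatorname{lm}f,\operatorname{lm}g)$, the $S$-polynomial is $S(f,g):=\frac{m_f\tilde{\bm{x}}^\gamma}{\operatorname{lm}(f)}f-\frac{m_g\tilde{\bm{x}}^\gamma}{\operatorname{lm}(g)}g$. *)

(* Defs.v *)
From HB Require Import structures.
From mathcomp Require Import all_boot all_algebra.
From mathcomp Require Import qpoly.
From mathcomp Require Import mpoly.

Set Implicit Arguments.
Unset Strict Implicit.
Unset Printing Implicit Defensive.

Import GRing.Theory.
Local Open Scope ring_scope.

Definition monomial_order (n : nat) (le : rel 'X_{1..n}) : Prop :=
  [/\ reflexive le, transitive le, antisymmetric le & total le] /\
  (forall m, le 0%MM m) /\
  (forall m1 m2 m, le m1 m2 -> le (m1 + m)%MM (m2 + m)%MM).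

Section LeadingTerms.
Variables (R : nzRingType) (n : nat) (le : rel 'X_{1..n}).

(* leading monomial w.r.t. le: the le-maximum of the support (0%MM for p = 0) *)
Definition lm (p : {mpoly R[n]}) : 'X_{1..n} :=
  foldr (fun m acc => if le acc m then m else acc) 0%MM (msupp p).

Definition lc (p : {mpoly R[n]}) : R := p@_(lm p).
Definition lt (p : {mpoly R[n]}) : {mpoly R[n]} := lc p *: 'X_[lm p].

End LeadingTerms.

Definition mcoprime (n : nat) (m1 m2 : 'X_{1..n}) : bool :=
  mlcm m1 m2 == (m1 + m2)%MM.

(* R_q = K[x1]/(q), represented by the polynomials of degree < deg q.      *)
(* mathcomp's {poly %/ h} requires a monic h; (q) = (monic q) as ideals.   *)
Section Rq.
Variables (K : fieldType).

Definition monicq (q : {poly K}) : {poly K} := (lead_coef q)^-1 *: q.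


Definition sigmaq (q : {poly K}) (p : {poly K}) : {poly %/ monicq q} :=
  in_qpoly (monicq q) p.

Definition iotaq (q : {poly K}) (r : {poly %/ monicq q}) : {poly K} := r.

Definition gcdm (a b : {poly K}) : {poly K} :=
  (lead_coef (gcdp a b))^-1 *: gcdp a b.
Definition lcmm (a b : {poly K}) : {poly K} := (a * b) %/ gcdm a b.

Definition Spoly (q : {poly K}) (n : nat) (le : rel 'X_{1..n})
  (f g : {mpoly {poly %/ monicq q}[n]}) : {mpoly {poly %/ monicq q}[n]} :=
  let lf := iotaq (lc le f) in
  let lg := iotaq (lc le g) in
  let mf := sigmaq q (lcmm lf lg %/ lf) in
  let mg := sigmaq q (lcmm lf lg %/ lg) in
  let gamma := mlcm (lm le f) (lm le g) in
  (mf *: 'X_[(gamma - lm le f)%MM]) * f - (mg *: 'X_[(gamma - lm le g)%MM]) * g.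

End Rq.

(* Main.v *)
Require Import Defs.
From HB Require Import structures.
From mathcomp Require Import all_boot all_algebra.
From mathcomp Require Import qpoly.
From mathcomp Require Import mpoly.
From mathcomp Require Import ring.
Import GRing.Theory.
Local Open Scope ring_scope.

Lemma lm_in_supp (R : nzRingType) (n : nat) (le : rel 'X_{1..n}) (p : {mpoly R[n]}) :
  (forall m, le 0%MM m) -> p != 0 -> lm le p \in msupp p.
Proof.
move=> h0 pn0; rewrite /lm.
have : msupp p != [::].
  apply: contra pn0 => /eqP e; apply/eqP/mpolyP => m.
  by rewrite mcoeff0; apply/eqP; rewrite -[_ == 0]negbK -mcoeff_msupp e.
elim: (msupp p) => [//|m s IH] _ /=.
case: s IH => [|m' s'] IH /=.
  by rewrite h0 mem_head.
have /(_ isT) := IH.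
set a := foldr _ _ _ => Ha.
case: ifP => _; first by rewrite mem_head.
by rewrite in_cons Ha orbT.
Qed.

Lemma sig_iota (K : fieldType) (q : {poly K}) (r : {poly %/ monicq q}) :
  sigmaq q (iotaq r) = r.
Proof. apply: val_inj; exact: (in_qpoly_small (size_mk_monic r)). Qed.

Theorem lemma5p5 (K : fieldType) (q : {poly K}) (n : nat)
  (le : rel 'X_{1..n}) (f g : {mpoly {poly %/ monicq q}[n]}) :
  (1 < size q)%N ->
  monomial_order le ->
  (forall c : {poly %/ monicq q}, f != c%:MP) ->
  (forall c : {poly %/ monicq q}, g != c%:MP) ->
  mcoprime (lm le f) (lm le g) ->
  let lf := iotaq (lc le f) in
  let lg := iotaq (lc le g) in
  let d := gcdm lf lg in
  let f1 := f - lt le f in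
  let g1 := g - lt le g in
  sigmaq q d *: Spoly le f g = f1 * lt le g - g1 * lt le f /\
  f1 * lt le g - g1 * lt le f = f1 * g - g1 * f.
Proof.
move=> _ [_ [h0 _]] fnc gnc /eqP cop lf lg d f1 g1.
have lfn0 : lf != 0.
  have fn0 : f != 0 by have := fnc 0; rewrite raddf0.
  have := @lm_in_supp _ _ le f h0 fn0; rewrite mcoeff_msupp.
  by apply: contra => /eqP e; apply/eqP/val_inj.
have lgn0 : lg != 0.
  have gn0 : g != 0 by have := gnc 0; rewrite raddf0.
  have := @lm_in_supp _ _ le g h0 gn0; rewrite mcoeff_msupp.
  by apply: contra => /eqP e; apply/eqP/val_inj.
have gn0 : gcdp lf lg != 0 by rewrite gcdp_eq0 negb_and lfn0.
have lcn0 : (lead_coef (gcdp lf lg))^-1 != 0 by rewrite invr_eq0 lead_coef_eq0.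
have dl : d %| lf by rewrite /d /gcdm dvdpZl // dvdp_gcdl.
have dr : d %| lg by rewrite /d /gcdm dvdpZl // dvdp_gcdr.
have Hmf : sigmaq q d * sigmaq q (lcmm lf lg %/ lf) = lc le g.
  rewrite /lcmm -/d -divp_mulA // mulKp // -rmorphM /= divpKC //.
  exact: sig_iota.
have Hmg : sigmaq q d * sigmaq q (lcmm lf lg %/ lg) = lc le f.
  rewrite /lcmm -/d -divp_mulAC // mulpK // -rmorphM /= divpKC //.
  exact: sig_iota.
have E : sigmaq q d *: Spoly le f g = lt le g * f - lt le f * g.
  rewrite /Spoly -/lf -/lg cop addmK (addmC (lm le f)) addmK.
  by rewrite scalerBr -!scalerAl !scalerA Hmf Hmg.
rewrite E /f1 /g1; split; ring.
Qed.
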